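(* Almost surely the following holds. Fix $C>1$ and $z,w\in\mathbb C$, let $\varepsilon\in(0,1/(100C))$, and let $\mathbf x,\mathbf y\in[0,1]^n$ satisfy $\max_{i\in\{1,\dots,n\}}|x_i-y_i|>8e\xi^{-1}C\varepsilon$. If $E^\varepsilon_{\mathbf x}(z,w)\cap G(C)$ occurs, then $E^\varepsilon_{\mathbf y}(z,w)$ does not occur.
   Context: Fix $\gamma\in(0,2)$; let $d_\gamma>2$ be the LQG dimension exponent and $\xi=\gamma/d_\gamma$. Let $h$ be a whole-plane Gaussian free field normalized so that its average over $\partial\mathbb D$ is zero. For $f$ a whole-plane GFF plus a continuous function, $D_f$ denotes the $\gamma$-LQG metric of $f$ (a metric on $\mathbb C$ inducing the Euclidean topology, a length space). Weyl scaling: a.s. for every continuous $g:\mathbb C\to\mathbb R$, $D_{h+g}(z,w)=\inf_P\int_0^{\mathrm{len}(P;D_h)}e^{\xi g(P(t))}\,dt$, the infimum over continuous paths from $z$ to $w$ parametrized by $D_h$-length. A $D_f$-geodesic from $z$ to $w$ is a path $P:[0,D_f(z,w)]\to\mathbb C$ with $P(0)=z$, $P(D_f(z,w))=w$, $D_f(P(s),P(t))=|t-s|$; $\mathcal B_\varepsilon(z;D_f)$ is the open $D_f$-ball. Fix $n\in\mathbb N$ and bounded open sets $U_i,U_i',V_i$ ($i=1,\dots,n$) with $\overline U_i\subset U_i'$, $\overline{U_i'}\subset V_i$, $\overline V_i\cap\overline V_j=\emptyset$ for $i\ne j$, $V_i\cap\partial\mathbb D=\emptyset$. Let $\phi_i:\mathbb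 C\to[0,1]$ be smooth, identically $1$ on $U_i'$ and $0$ outside $V_i$. For $\mathbf x\in[0,1]^n$ let $h_{\mathbf x}=h+\sum_{i=1}^n x_i\phi_i$. $G(C)$ is the event that $D_h(\partial U_i,\partial U_i')\ge1/C$ for all $i$. $E^\varepsilon_{\mathbf x}(z,w)$ is the event that (1) $\mathcal B_\varepsilon(z;D_{h_{\mathbf x}})$, $\mathcal B_\varepsilon(w;D_{h_{\mathbf x}})$ and $\bigcup_i\overline V_i$ are pairwise disjoint, and (2) there are $D_{h_{\mathbf x}}$-geodesics $P^0,\dots,P^n$, each from a point of $\mathcal B_\varepsilon(z;D_{h_{\mathbf x}})$ to a point of $\mathcal B_\varepsilon(w;D_{h_{\mathbf x}})$, with $P^i\cap U_i\ne\emptyset$ and $P^i\cap\bigcup_{j\ne i}\overline V_j=\emptyset$ for $i\in\{1,\dots,n\}$, and $P^0\cap\bigcup_{j=1}^n\overline V_j=\emptyset$. *)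

(* Defs.v *)
From Stdlib Require Import Reals Lra.
From Coquelicot Require Import Coquelicot.
Open Scope R_scope.

(* The complex plane as R x R with the Euclidean distance. *)
Definition pt : Type := (R * R)%type.
Definition edist (p q : pt) : R :=
  sqrt ((fst p - fst q) ^ 2 + (snd p - snd q) ^ 2).
Definition pset := pt -> Prop.

Definition is_open (A : pset) : Prop :=
  forall p, A p -> exists r, 0 < r /\ forall q, edist p q < r -> A q.
Definition bounded (A : pset) : Prop :=
  exists M, forall p, A p -> edist (0, 0) p <= M.
Definition closure (A : pset) : pset :=
  fun p => forall r, 0 < r -> exists q, A q /\ edist p q < r.
Definition boundary (A : pset) : pset :=
  fun p => closure A p /\ closure (fun q => ~ A q) p.
Definition unit_circle : pset := fun p => edist (0, 0) p = 1.

Definition cont2 (f : pt -> R) : Prop :=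
  forall p eps, 0 < eps -> exists d, 0 < d /\
    forall q, edist p q < d -> Rabs (f q - f p) < eps.

(* C^infinity functions on R^2: continuous, with both partial derivatives
   existing everywhere and themselves C^infinity. *)
CoInductive smooth (f : pt -> R) : Prop :=
  smooth_intro : forall fx fy : pt -> R,
    cont2 f ->
    (forall a b, is_derive (fun t => f (t, b)) a (fx (a, b))) ->
    (forall a b, is_derive (fun t => f (a, t)) b (fy (a, b))) ->
    smooth fx -> smooth fy -> smooth f.

Fixpoint rsum (k : nat) (f : nat -> R) : R :=
  match k with O => 0 | S k' => rsum k' f + f k' end.

Definition glb_of (E : R -> Prop) (m : R) : Prop :=
  (forall v, E v -> m <= v) /\ (forall b, (forall v, E v -> b <= v) -> b <= m).

Definition path_cont (P : R -> pt) (a b : R) : Prop :=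
  forall s, a <= s <= b -> forall eps, 0 < eps -> exists d, 0 < d /\
    forall t, a <= t <= b -> Rabs (t - s) < d -> edist (P s) (P t) < eps.

Definition is_partition (a b : R) (t : nat -> R) (k : nat) : Prop :=
  t O = a /\ t k = b /\ forall i, (i < k)%nat -> t i <= t (S i).
Definition partition_sum (D : pt -> pt -> R) (P : R -> pt) (t : nat -> R) (k : nat) : R :=
  rsum k (fun i => D (P (t i)) (P (t (S i)))).
Definition path_length (D : pt -> pt -> R) (P : R -> pt) (a b l : R) : Prop :=
  is_lub (fun v => exists t k, is_partition a b t k /\ v = partition_sum D P t k) l.

Definition is_metric (D : pt -> pt -> R) : Prop :=
  (forall z w, 0 <= D z w) /\ (forall z w, D z w = 0 <-> z = w) /\
  (forall z w, D z w = D w z) /\ (forall z u w, D z w <= D z u + D u w).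

Definition induces_eucl_top (D : pt -> pt -> R) : Prop :=
  (forall z eps, 0 < eps -> exists d, 0 < d /\ forall u, edist z u < d -> D z u < eps) /\
  (forall z eps, 0 < eps -> exists d, 0 < d /\ forall u, D z u < d -> edist z u < eps).

Definition length_space (D : pt -> pt -> R) : Prop :=
  forall z w, glb_of (fun l => exists P, path_cont P 0 1 /\ P 0 = z /\ P 1 = w /\
                                     path_length D P 0 1 l) (D z w).

Definition length_param (D : pt -> pt -> R) (P : R -> pt) (L : R) : Prop :=
  0 <= L /\ path_cont P 0 L /\
  forall s t, 0 <= s -> s <= t -> t <= L -> path_length D P s t (t - s).

(* the set whose infimum is D_{h+g}(z,w) in the Weyl scaling formula *)
Definition weyl_set (D0 : pt -> pt -> R) (xi : R) (g : pt -> R) (z w : pt) : R -> Prop :=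
  fun v => exists P L, length_param D0 P L /\ P 0 = z /\ P L = w /\
                       v = RInt (fun t => exp (xi * g (P t))) 0 L.

Definition zero_fn : pt -> R := fun _ => 0.

(* D g stands for D_{h+g}. The a.s. properties of the LQG metric used:
   D_h is a metric inducing the Euclidean topology and a length space,
   and Weyl scaling holds for every continuous g. *)
Definition LQG_family (xi : R) (D : (pt -> R) -> pt -> pt -> R) : Prop :=
  is_metric (D zero_fn) /\ induces_eucl_top (D zero_fn) /\ length_space (D zero_fn) /\
  forall g, cont2 g -> forall z w, glb_of (weyl_set (D zero_fn) xi g z w) (D g z w).

(* h_x - h = sum_i x_i phi_i  (indices 0..n-1 instead of 1..n) *)
Definition hfield (n : nat) (phi : nat -> pt -> R) (x : nat -> R) : pt -> R :=
  fun u => rsum n (fun i => x i * phi i u).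

Definition in_cube (n : nat) (x : nat -> R) : Prop :=
  forall i, (i < n)%nat -> 0 <= x i <= 1.

Definition ball (D : pt -> pt -> R) (z : pt) (eps : R) : pset := fun u => D z u < eps.

Definition geodesic (D : pt -> pt -> R) (P : R -> pt) (a b : pt) : Prop :=
  P 0 = a /\ P (D a b) = b /\
  forall s t, 0 <= s <= D a b -> 0 <= t <= D a b -> D (P s) (P t) = Rabs (t - s).

Definition union_clV (n : nat) (V : nat -> pset) : pset :=
  fun u => exists j, (j < n)%nat /\ closure (V j) u.

Definition E_event (D : (pt -> R) -> pt -> pt -> R) (n : nat) (U V : nat -> pset)
    (phi : nat -> pt -> R) (x : nat -> R) (eps : R) (z w : pt) : Prop :=
  let Dx := D (hfield n phi x) in
  (forall u, ~ (ball Dx z eps u /\ ball Dx w eps u)) /\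
  (forall u, ~ (ball Dx z eps u /\ union_clV n V u)) /\
  (forall u, ~ (ball Dx w eps u /\ union_clV n V u)) /\
  (exists P a b, ball Dx z eps a /\ ball Dx w eps b /\ geodesic Dx P a b /\
     forall t, 0 <= t <= Dx a b -> ~ union_clV n V (P t)) /\
  (forall i, (i < n)%nat ->
     exists P a b, ball Dx z eps a /\ ball Dx w eps b /\ geodesic Dx P a b /\
       (exists t, 0 <= t <= Dx a b /\ U i (P t)) /\
       forall t, 0 <= t <= Dx a b ->
         forall j, (j < n)%nat -> j <> i -> ~ closure (V j) (P t)).

Definition G_event (D : (pt -> R) -> pt -> pt -> R) (n : nat) (U U' : nat -> pset)
    (C : R) : Prop :=
  forall i, (i < n)%nat -> forall a b, boundary (U i) a -> boundary (U' i) b ->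
    1 / C <= D zero_fn a b.

Definition setup (n : nat) (U U' V : nat -> pset) (phi : nat -> pt -> R) : Prop :=
  (forall i, (i < n)%nat ->
     is_open (U i) /\ is_open (U' i) /\ is_open (V i) /\
     bounded (U i) /\ bounded (U' i) /\ bounded (V i) /\
     (forall p, closure (U i) p -> U' i p) /\
     (forall p, closure (U' i) p -> V i p) /\
     (forall p, ~ (V i p /\ unit_circle p))) /\
  (forall i j, (i < n)%nat -> (j < n)%nat -> i <> j ->
     forall p, ~ (closure (V i) p /\ closure (V j) p)) /\
  (forall i, (i < n)%nat ->
     smooth (phi i) /\ (forall p, 0 <= phi i p <= 1) /\
     (forall p, U' i p -> phi i p = 1) /\ (forall p, ~ V i p -> phi i p = 0)).

(* Main.v *)
Require Import Defs.
From Stdlib Require Import Reals.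
From Coquelicot Require Import Coquelicot.
From Stdlib Require Import Lra Lia Classical FunctionalExtensionality.
Open Scope R_scope.

Lemma rsum_ext k f g : (forall i, (i < k)%nat -> f i = g i) -> rsum k f = rsum k g.
Proof.
  induction k; simpl; intros H; auto.
  rewrite IHk by (intros; apply H; lia). rewrite (H k) by lia. reflexivity.
Qed.

Lemma rsum_app k1 k2 f : rsum (k1 + k2) f = rsum k1 f + rsum k2 (fun i => f (k1 + i)%nat).
Proof.
  induction k2; simpl.
  - rewrite Nat.add_0_r. ring.
  - rewrite Nat.add_succ_r. simpl. rewrite IHk2. ring.
Qed.

Lemma rsum_shift1 k f : rsum (S k) f = f O + rsum k (fun i => f (S i)).
Proof.
  induction k; simpl. ring. simpl in IHk. rewrite IHk. ring.
Qed.

Lemma rsum_rev k f : rsum k f = rsum k (fun i => f (k - 1 - i)%nat).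
Proof.
  revert f; induction k; intros f; [reflexivity|].
  rewrite (rsum_shift1 k (fun i => f (S k - 1 - i)%nat)). simpl rsum at 1.
  rewrite (IHk f).
  replace (S k - 1 - 0)%nat with k by lia.
  rewrite (rsum_ext k (fun i => f (S k - 1 - S i)%nat) (fun i => f (k - 1 - i)%nat)).
  ring. intros; f_equal; lia.
Qed.

Lemma rsum_zero k f : (forall i, (i < k)%nat -> f i = 0) -> rsum k f = 0.
Proof.
  induction k; simpl; intros H; auto. rewrite IHk, H; try lra; try lia. intros; apply H; lia.
Qed.

Lemma rsum_single k f i : (i < k)%nat -> (forall j, (j < k)%nat -> j <> i -> f j = 0) -> rsum k f = f i.
Proof.
  induction k; simpl; intros Hi H. lia.
  destruct (Nat.eq_dec i k).
  - subst. rewrite rsum_zero. ring. intros; apply H; lia.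
  - rewrite IHk by (try lia; intros; apply H; lia). rewrite (H k) by lia. ring.
Qed.

Definition PS (D0 : pt -> pt -> R) (P : R -> pt) (a b v : R) : Prop :=
  exists t k, is_partition a b t k /\ v = partition_sum D0 P t k.

Lemma part_lo a b t k : is_partition a b t k -> forall i, (i <= k)%nat -> a <= t i.
Proof.
  intros [H0 [Hk Hm]] i. induction i; intros Hi. lra.
  specialize (Hm i ltac:(lia)). specialize (IHi ltac:(lia)). lra.
Qed.

Lemma part_hi a b t k : is_partition a b t k -> forall i, (i <= k)%nat -> t i <= b.
Proof.
  intros [H0 [Hk Hm]].
  assert (forall m i, (i + m = k)%nat -> t i <= b).
  { induction m; intros i Hi. replace i with k by lia. lra.
    specialize (IHm (S i) ltac:(lia)). specialize (Hm i ltac:(lia)). lra. }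
  intros i Hi. apply (H (k - i)%nat). lia.
Qed.

Lemma lip_sum (D0 : pt -> pt -> R) P a b t k :
  (forall s u, a <= s -> s <= u -> u <= b -> D0 (P s) (P u) <= u - s) ->
  is_partition a b t k -> partition_sum D0 P t k <= b - a.
Proof.
  intros HL Hp.
  assert (forall m, (m <= k)%nat -> rsum m (fun i => D0 (P (t i)) (P (t (S i)))) <= t m - t O).
  { induction m; intros Hm; simpl. lra.
    specialize (IHm ltac:(lia)).
    pose proof (part_lo _ _ _ _ Hp m ltac:(lia)) as Ha.
    pose proof (part_hi _ _ _ _ Hp (S m) ltac:(lia)) as Hb.
    destruct Hp as [H0 [Hk Hmon]]. specialize (Hmon m ltac:(lia)).
    specialize (HL (t m) (t (S m)) Ha Hmon Hb). lra. }
  unfold partition_sum. specialize (H k (le_n k)).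
  destruct Hp as [H0 [Hk _]]. rewrite H0, Hk in H. exact H.
Qed.

Lemma is_lub_ext (E F : R -> Prop) l : (forall v, E v <-> F v) -> is_lub E l -> is_lub F l.
Proof.
  intros H [H1 H2]. split.
  - intros v Hv. apply H1, H, Hv.
  - intros b Hb. apply H2. intros v Hv. apply Hb, H, Hv.
Qed.

Lemma path_length_PS D0 P a b l :
  path_length D0 P a b l <-> is_lub (PS D0 P a b) l.
Proof. unfold path_length, PS. tauto. Qed.

Definition US D0 (P : R -> pt) a b : Prop :=
  forall s t, a <= s -> s <= t -> t <= b -> path_length D0 P s t (t - s).

Lemma US_lip D0 P a b : US D0 P a b ->
  forall s t, a <= s -> s <= t -> t <= b -> D0 (P s) (P t) <= t - s.
Proof.
  intros H s t H1 H2 H3. destruct (H s t H1 H2 H3) as [Hub _].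
  apply Hub. exists (fun i => match i with O => s | _ => t end), 1%nat. split.
  - split; [reflexivity | split; [reflexivity|]]. intros i Hi. destruct i; [lra | lia].
  - unfold partition_sum. simpl. ring.
Qed.

Lemma path_length_ext D0 P P' s t l : (forall u, s <= u <= t -> P u = P' u) ->
  path_length D0 P s t l -> path_length D0 P' s t l.
Proof.
  intros He H. apply path_length_PS. apply path_length_PS in H.
  apply (is_lub_ext (PS D0 P s t)); auto.
  intros v; split; intros [tt [k [Hp Hv]]]; exists tt, k; split; auto; rewrite Hv;
  unfold partition_sum; apply rsum_ext; intros i Hi;
  rewrite !He; auto;
  split; (apply (part_lo _ _ _ _ Hp) || apply (part_hi _ _ _ _ Hp)); lia.
Qed.

Lemma path_length_shift D0 P s t l c : path_length D0 P s t l ->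
  path_length D0 (fun u => P (u - c)) (s + c) (t + c) l.
Proof.
  intros H. apply path_length_PS. apply path_length_PS in H.
  apply (is_lub_ext (PS D0 P s t)); auto.
  intros v; split; intros [tt [k [[H0 [Hk Hm]] Hv]]].
  - exists (fun i => tt i + c), k. split.
    + split; [rewrite H0; ring | split; [rewrite Hk; ring|]]. intros i Hi; specialize (Hm i Hi); lra.
    + rewrite Hv. unfold partition_sum. apply rsum_ext. intros i _.
      replace (tt i + c - c) with (tt i) by ring. replace (tt (S i) + c - c) with (tt (S i)) by ring. reflexivity.
  - exists (fun i => tt i - c), k. split.
    + split; [rewrite H0; ring | split; [rewrite Hk; ring|]]. intros i Hi; specialize (Hm i Hi); lra.
    + rewrite Hv. reflexivity.
Qed.


Definition concat_part (p1 p2 : nat -> R) (k1 : nat) : nat -> R :=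
  fun i => if Compare_dec.le_lt_dec i k1 then p1 i else p2 (i - k1)%nat.

Lemma US_concat D0 P a m b : is_metric D0 -> US D0 P a m -> US D0 P m b -> a <= m <= b ->
  US D0 P a b.
Proof.
  intros HM H1 H2 Hm s t Hs Hst Ht.
  destruct (Rle_dec t m) as [Htm|Htm]; [apply H1; lra|].
  destruct (Rle_dec m s) as [Hms|Hms]; [apply H2; lra|].
  destruct HM as [_ [_ [_ Htri]]].
  assert (Hlip : forall u v, s <= u -> u <= v -> v <= t -> D0 (P u) (P v) <= v - u).
  { intros u v Hu Huv Hv.
    destruct (Rle_dec v m). apply (US_lip _ _ _ _ H1); lra.
    destruct (Rle_dec m u). apply (US_lip _ _ _ _ H2); lra.
    pose proof (Htri (P u) (P m) (P v)).
    pose proof (US_lip _ _ _ _ H1 u m ltac:(lra) ltac:(lra) ltac:(lra)).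
    pose proof (US_lip _ _ _ _ H2 m v ltac:(lra) ltac:(lra) ltac:(lra)). lra. }
  split.
  - intros v [tt [k [Hp Hv]]]. rewrite Hv. apply (lip_sum D0 P s t tt k); auto.
  - intros B HB.
    destruct (H1 s m ltac:(lra) ltac:(lra) ltac:(lra)) as [_ Hl1].
    destruct (H2 m t ltac:(lra) ltac:(lra) ltac:(lra)) as [_ Hl2].
    assert (Hsum : forall p1 k1 p2 k2, is_partition s m p1 k1 -> is_partition m t p2 k2 ->
              partition_sum D0 P p1 k1 + partition_sum D0 P p2 k2 <= B).
    { intros p1 k1 p2 k2 Hp1 Hp2.
      pose proof Hp1 as [A0 [Ak Am]]. pose proof Hp2 as [B0 [Bk Bm]].
      assert (Hq2 : forall j, concat_part p1 p2 k1 (k1 + j)%nat = p2 j).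
      { intros j. unfold concat_part. destruct (Compare_dec.le_lt_dec (k1 + j) k1).
        - replace j with O by lia. replace (k1 + 0)%nat with k1 by lia. congruence.
        - f_equal; lia. }
      assert (Hq1 : forall j, (j <= k1)%nat -> concat_part p1 p2 k1 j = p1 j).
      { intros j Hj. unfold concat_part. destruct (Compare_dec.le_lt_dec j k1); auto; lia. }
      apply HB. exists (concat_part p1 p2 k1), (k1 + k2)%nat. split.
      + split; [rewrite Hq1; auto; lia|]. split; [rewrite Hq2; auto|].
        intros i Hi. destruct (Compare_dec.le_lt_dec (S i) k1).
        * rewrite !Hq1 by lia. apply Am; lia.
        * replace i with (k1 + (i - k1))%nat by lia. replace (S (k1 + (i - k1))) with (k1 + S (i - k1))%nat by lia.
          rewrite !Hq2. apply Bm; lia.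
      + unfold partition_sum. rewrite rsum_app. f_equal.
        * apply rsum_ext. intros i Hi. rewrite !Hq1 by lia. reflexivity.
        * apply rsum_ext. intros i Hi. replace (S (k1 + i)) with (k1 + S i)%nat by lia. rewrite !Hq2. reflexivity. }
    assert (Hx : forall p2 k2, is_partition m t p2 k2 -> m - s <= B - partition_sum D0 P p2 k2).
    { intros p2 k2 Hp2. apply Hl1. intros v [p1 [k1 [Hp1 Hv]]]. rewrite Hv.
      specialize (Hsum p1 k1 p2 k2 Hp1 Hp2). lra. }
    assert (t - m <= B - (m - s)).
    { apply Hl2. intros v [p2 [k2 [Hp2 Hv]]]. rewrite Hv. specialize (Hx p2 k2 Hp2). lra. }
    lra.
Qed.

Lemma PS_rev D0 P T s t v : (forall x y, D0 x y = D0 y x) ->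
  PS D0 (fun u => P (T - u)) s t v -> PS D0 P (T - t) (T - s) v.
Proof.
  intros Hsym [tt [k [[H0 [Hk Hm]] Hv]]].
  exists (fun i => T - tt (k - i)%nat), k. split.
  - split; [rewrite Nat.sub_0_r, Hk; ring|]. split; [rewrite Nat.sub_diag, H0; ring|].
    intros i Hi. replace (k - i)%nat with (S (k - S i)) by lia. specialize (Hm (k - S i)%nat ltac:(lia)). lra.
  - rewrite Hv. unfold partition_sum. symmetry. rewrite (rsum_rev k). apply rsum_ext. intros i Hi.
    replace (k - (k - 1 - i))%nat with (S i) by lia. replace (k - S (k - 1 - i))%nat with i by lia.
    apply Hsym.
Qed.

Lemma US_rev D0 P T : (forall x y, D0 x y = D0 y x) -> US D0 P 0 T -> US D0 (fun u => P (T - u)) 0 T.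
Proof.
  intros Hsym H s t Hs Hst Ht.
  specialize (H (T - t) (T - s) ltac:(lra) ltac:(lra) ltac:(lra)).
  replace (T - s - (T - t)) with (t - s) in H by ring.
  apply path_length_PS. apply path_length_PS in H.
  apply (is_lub_ext (PS D0 P (T - t) (T - s))); auto.
  intros v; split; intros Hv.
  - assert (Hf : (fun u => P (T - (T - u))) = P).
    { apply functional_extensionality. intros u. f_equal. ring. }
    rewrite <- Hf in Hv. apply (PS_rev D0 (fun w => P (T - w))) in Hv; auto.
    replace (T - (T - s)) with s in Hv by ring. replace (T - (T - t)) with t in Hv by ring. exact Hv.
  - apply PS_rev; auto.
Qed.


Lemma LP_of_US D0 P L : is_metric D0 -> induces_eucl_top D0 -> 0 <= L -> US D0 P 0 L ->
  length_param D0 P L.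
Proof.
  intros HM [_ HE] HL HU. split; [lra|]. split; [|exact HU].
  intros s Hs eps Heps. destruct (HE (P s) eps Heps) as [d [Hd Hd2]].
  exists d. split; auto. intros t Ht Hts. apply Hd2.
  destruct HM as [_ [_ [Hsym _]]].
  destruct (Rle_dec s t).
  - pose proof (US_lip _ _ _ _ HU s t ltac:(lra) r ltac:(lra)).
    rewrite Rabs_right in Hts by lra. lra.
  - pose proof (US_lip _ _ _ _ HU t s ltac:(lra) ltac:(lra) ltac:(lra)).
    rewrite Rabs_left in Hts by lra. rewrite Hsym. lra.
Qed.

Lemma LP_restrict D0 P L t : length_param D0 P L -> 0 <= t <= L -> length_param D0 P t.
Proof.
  intros [H0 [Hc Hu]] Ht. split; [lra|]. split.
  - intros s Hs eps Heps. destruct (Hc s ltac:(lra) eps Heps) as [d [Hd Hd2]].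
    exists d; split; auto. intros u Hu' Hus. apply Hd2; auto; lra.
  - intros s u H1 H2 H3. apply Hu; lra.
Qed.

Definition clamp (L s : R) := Rmax 0 (Rmin L s).

Lemma clamp_lip L s z : 0 <= L -> Rabs (clamp L s - clamp L z) <= Rabs (s - z).
Proof.
  intros HL. unfold clamp, Rmax, Rmin.
  repeat destruct Rle_dec; unfold Rabs; repeat destruct Rcase_abs; lra.
Qed.

Lemma clamp_in L s : 0 <= L -> 0 <= clamp L s <= L.
Proof. intros HL. unfold clamp, Rmax, Rmin. repeat destruct Rle_dec; lra. Qed.

Lemma clamp_id L s : 0 <= s <= L -> clamp L s = s.
Proof. intros H. unfold clamp, Rmax, Rmin. repeat destruct Rle_dec; lra. Qed.

Definition Fw (xi : R) (g : pt -> R) (P : R -> pt) : R -> R := fun s => exp (xi * g (P s)).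

Lemma Fw_int xi g D0 P L a b : cont2 g -> length_param D0 P L -> 0 <= a -> a <= b -> b <= L ->
  ex_RInt (Fw xi g P) a b.
Proof.
  intros Hg [HL [Hc _]] Ha Hab Hb.
  apply (ex_RInt_ext (fun s => exp (xi * g (P (clamp L s))))).
  { intros x Hx. rewrite Rmin_left, Rmax_right in Hx by lra. unfold Fw.
    rewrite clamp_id by lra. reflexivity. }
  apply (@ex_RInt_continuous R_CompleteNormedModule). intros z _.
  apply continuity_pt_filterlim.
  assert (Hc1 : continuity_pt (fun s => g (P (clamp L s))) z).
  { unfold continuity_pt, continue_in, limit1_in, limit_in. simpl. unfold R_dist.
    intros eps Heps.
    destruct (Hg (P (clamp L z)) eps Heps) as [d1 [Hd1 H1]].
    pose proof (clamp_in L z HL) as Hz.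
    destruct (Hc (clamp L z) Hz d1 Hd1) as [d2 [Hd2 H2]].
    exists d2. split; auto. intros x [_ Hx].
    apply H1. apply H2. apply clamp_in; auto.
    pose proof (clamp_lip L x z HL). lra. }
  assert (Hc2 : continuity_pt (fun s => xi * g (P (clamp L s))) z).
  { apply (continuity_pt_mult (fun _ => xi)); auto. apply continuity_pt_const. intros u v; reflexivity. }
  apply (continuity_pt_comp (fun s => xi * g (P (clamp L s))) exp z Hc2).
  apply derivable_continuous_pt, derivable_pt_exp.
Qed.


Lemma glb_approx E m : glb_of E m -> forall eta, 0 < eta -> exists v, E v /\ v < m + eta.
Proof.
  intros [_ H] eta Heta. apply NNPP. intros Hn.
  assert (m + eta <= m). { apply H. intros v Hv. apply Rnot_lt_le. intros Hlt. apply Hn. exists v; auto. }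
  lra.
Qed.

Lemma W_lb xi D g P T t : LQG_family xi D -> cont2 g -> length_param (D zero_fn) P T -> 0 <= t <= T ->
  D g (P 0) (P t) <= RInt (Fw xi g P) 0 t.
Proof.
  intros [_ [_ [_ HW]]] Hg HP Ht. destruct (HW g Hg (P 0) (P t)) as [H _].
  apply H. exists P, t. split; [eapply LP_restrict; eauto|]. auto.
Qed.

Lemma W_path xi D g a b eta : LQG_family xi D -> cont2 g -> 0 < eta ->
  exists P T, length_param (D zero_fn) P T /\ P 0 = a /\ P T = b /\
     RInt (Fw xi g P) 0 T < D g a b + eta.
Proof.
  intros [_ [_ [_ HW]]] Hg He. destruct (glb_approx _ _ (HW g Hg a b) eta He) as [v [[P [T [H1 [H2 [H3 H4]]]]] Hv]].
  exists P, T. subst v. auto.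
Qed.

Lemma Fw_pos xi g P s : 0 < Fw xi g P s.
Proof. apply exp_pos. Qed.

Lemma RInt_mono_t xi D0 g P T t : cont2 g -> length_param D0 P T -> 0 <= t <= T ->
  RInt (Fw xi g P) 0 t <= RInt (Fw xi g P) 0 T.
Proof.
  intros Hg HP Ht.
  rewrite <- (RInt_Chasles (Fw xi g P) 0 t T).
  - assert (0 <= RInt (Fw xi g P) t T).
    { apply RInt_ge_0; [lra| eapply Fw_int; eauto; lra|]. intros; left; apply Fw_pos. }
    change (plus ?a ?b) with (a + b). lra.
  - eapply Fw_int; eauto; lra.
  - eapply Fw_int; eauto; lra.
Qed.

Lemma D_ge_D0 xi D g a b : LQG_family xi D -> 0 < xi -> cont2 g -> (forall p, 0 <= g p) ->
  D zero_fn a b <= D g a b.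
Proof.
  intros HL Hxi Hg Hpos. pose proof HL as [HM [HE [_ HW]]].
  destruct (HW g Hg a b) as [_ H]. apply H.
  intros v [P [T [HP [H0 [HT Hv]]]]]. subst v.
  pose proof HP as [HT0 [_ HU]].
  assert (D zero_fn (P 0) (P T) <= T) by (pose proof (US_lip _ _ _ _ HU 0 T); lra).
  assert (RInt (fun _ => 1) 0 T <= RInt (Fw xi g P) 0 T).
  { apply RInt_le; auto. apply ex_RInt_const. eapply Fw_int; eauto; lra.
    intros x _. unfold Fw. rewrite <- exp_0. destruct (Req_dec (xi * g (P x)) 0) as [->|Hn]; [lra|].
    left. apply exp_increasing. specialize (Hpos (P x)). assert (0 <= xi * g (P x)) by nra. lra. }
  rewrite RInt_const in H2. change (scal ?a ?b) with (a * b) in H2.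
  rewrite H0, HT in H1. unfold Fw in H2. lra.
Qed.


Definition Rcat (R1 R2 : R -> pt) (T1 : R) : R -> pt :=
  fun u => if Rle_dec u T1 then R1 u else R2 (u - T1).

Lemma Rcat_LP D0 R1 R2 T1 T2 : is_metric D0 -> induces_eucl_top D0 ->
  length_param D0 R1 T1 -> length_param D0 R2 T2 -> R1 T1 = R2 0 ->
  length_param D0 (Rcat R1 R2 T1) (T1 + T2).
Proof.
  intros HM HE [H10 [_ HU1]] [H20 [_ HU2]] Hj.
  apply LP_of_US; auto; try lra.
  apply (US_concat _ _ 0 T1); auto; try lra.
  - intros s t Hs Hst Ht. apply (path_length_ext _ R1). intros u Hu. unfold Rcat.
    destruct Rle_dec; auto; lra. apply HU1; lra.
  - intros s t Hs Hst Ht.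
    pose proof (path_length_shift _ _ _ _ _ T1 (HU2 (s - T1) (t - T1) ltac:(lra) ltac:(lra) ltac:(lra))) as H.
    replace (s - T1 + T1) with s in H by ring. replace (t - T1 + T1) with t in H by ring.
    replace (t - T1 - (s - T1)) with (t - s) in H by ring.
    refine (path_length_ext _ _ _ _ _ _ _ H).
    intros u Hu. unfold Rcat. destruct Rle_dec; auto. replace u with T1 by lra.
    rewrite Hj. f_equal. ring.
Qed.

Lemma W_tri xi D g a b c : LQG_family xi D -> cont2 g -> D g a c <= D g a b + D g b c.
Proof.
  intros HL Hg. pose proof HL as [HM [HE [_ HW]]].
  apply le_epsilon. intros eps Heps.
  destruct (W_path xi D g a b (eps/2) HL Hg ltac:(lra)) as [R1 [T1 [HP1 [H1a [H1b H1]]]]].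
  destruct (W_path xi D g b c (eps/2) HL Hg ltac:(lra)) as [R2 [T2 [HP2 [H2a [H2b H2]]]]].
  pose proof HP1 as [HT1 _]. pose proof HP2 as [HT2 _].
  assert (HPc := Rcat_LP _ R1 R2 T1 T2 HM HE HP1 HP2 ltac:(congruence)).
  assert (Hle : D g a c <= RInt (Fw xi g (Rcat R1 R2 T1)) 0 (T1 + T2)).
  { destruct (HW g Hg a c) as [H _]. apply H. exists (Rcat R1 R2 T1), (T1 + T2). split; auto.
    unfold Rcat. split; [destruct Rle_dec; [auto|lra]|]. split; auto.
    destruct Rle_dec. replace (T1 + T2) with T1 by lra. replace T2 with 0 in H2b by lra. congruence.
    rewrite <- H2b. f_equal. ring. }
  assert (Hsplit : RInt (Fw xi g (Rcat R1 R2 T1)) 0 (T1 + T2) =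
                   RInt (Fw xi g R1) 0 T1 + RInt (Fw xi g R2) 0 T2).
  { rewrite <- (RInt_Chasles _ 0 T1 (T1 + T2)); [| eapply Fw_int; eauto; lra | eapply Fw_int; eauto; lra].
    assert (Hp : forall x y : R, plus x y = x + y) by reflexivity. rewrite Hp. f_equal.
    - apply RInt_ext. intros x Hx. rewrite Rmin_left, Rmax_right in Hx by lra.
      unfold Fw, Rcat. destruct Rle_dec; auto; lra.
    - rewrite (RInt_ext _ (fun y => scal 1 (Fw xi g R2 (1 * y + - T1)))).
      + transitivity (RInt (Fw xi g R2) (1*T1 + -T1) (1*(T1+T2) + -T1)).
        * apply (RInt_comp_lin (V := R_CompleteNormedModule)).
          replace (1 * T1 + - T1) with 0 by ring. replace (1 * (T1 + T2) + - T1) with T2 by ring.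
          eapply Fw_int; eauto; lra.
        * replace (1 * T1 + - T1) with 0 by ring. replace (1 * (T1 + T2) + - T1) with T2 by ring. reflexivity.
      + intros x Hx. rewrite Rmin_left, Rmax_right in Hx by lra.
        replace (scal 1 (Fw xi g R2 (1*x + -T1))) with (1 * Fw xi g R2 (1*x + -T1)) by reflexivity.
        rewrite Rmult_1_l. unfold Fw, Rcat. destruct Rle_dec; [lra|]. replace (1 * x + - T1) with (x - T1) by ring. reflexivity. }
  lra.
Qed.


Lemma W_sym_le xi D g a b : LQG_family xi D -> cont2 g -> D g b a <= D g a b.
Proof.
  intros HL Hg. pose proof HL as [HM [HE [_ HW]]].
  apply le_epsilon. intros eps Heps.
  destruct (W_path xi D g a b eps HL Hg Heps) as [R1 [T1 [HP1 [H1a [H1b H1]]]]].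
  pose proof HP1 as [HT1 [_ HU1]].
  assert (HPr : length_param (D zero_fn) (fun u => R1 (T1 - u)) T1).
  { apply LP_of_US; auto. apply US_rev; auto. apply HM. }
  assert (Hle : D g b a <= RInt (Fw xi g (fun u => R1 (T1 - u))) 0 T1).
  { destruct (HW g Hg b a) as [H _]. apply H. exists (fun u => R1 (T1 - u)), T1. split; auto.
    split; [rewrite Rminus_0_r; auto|]. split; [rewrite Rminus_eq_0; auto|]. reflexivity. }
  assert (Heq : RInt (Fw xi g (fun u => R1 (T1 - u))) 0 T1 = RInt (Fw xi g R1) 0 T1).
  { assert (Hi : ex_RInt (Fw xi g (fun u => R1 (T1 - u))) 0 T1) by (eapply Fw_int; eauto; lra).
    assert (Hi1 : ex_RInt (Fw xi g R1) 0 T1) by (eapply Fw_int; eauto; lra).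
    assert (Hc : RInt (fun y => scal (-1) (Fw xi g R1 (-1 * y + T1))) 0 T1 = RInt (Fw xi g R1) T1 0).
    { transitivity (RInt (Fw xi g R1) (-1 * 0 + T1) (-1 * T1 + T1)).
      - apply (RInt_comp_lin (V := R_CompleteNormedModule)).
        replace (-1 * 0 + T1) with T1 by ring. replace (-1 * T1 + T1) with 0 by ring.
        apply ex_RInt_swap. exact Hi1.
      - replace (-1 * 0 + T1) with T1 by ring. replace (-1 * T1 + T1) with 0 by ring. reflexivity. }
    assert (Hs : RInt (Fw xi g R1) T1 0 = - RInt (Fw xi g R1) 0 T1).
    { rewrite <- (opp_RInt_swap (V := R_CompleteNormedModule) _ 0 T1 Hi1). reflexivity. }
    assert (He : RInt (fun y => scal (-1) (Fw xi g R1 (-1 * y + T1))) 0 T1 =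
                 - RInt (Fw xi g (fun u => R1 (T1 - u))) 0 T1).
    { transitivity (RInt (fun y => opp (Fw xi g (fun u => R1 (T1 - u)) y)) 0 T1).
      - apply RInt_ext. intros x _.
        assert (E : -1 * Fw xi g R1 (-1 * x + T1) = - Fw xi g (fun u => R1 (T1 - u)) x).
        { unfold Fw. replace (-1 * x + T1) with (T1 - x) by ring. ring. }
        exact E.
      - rewrite (RInt_opp (V := R_CompleteNormedModule)) by exact Hi. reflexivity. }
    lra. }
  lra.
Qed.

Lemma W_sym xi D g a b : LQG_family xi D -> cont2 g -> D g a b = D g b a.
Proof. intros. apply Rle_antisym; apply (W_sym_le xi); auto. Qed.


Lemma compare xi D g g' p q r c : LQG_family xi D -> cont2 g -> cont2 g' -> 0 <= c ->
  D g p q < r -> (forall u, D g p u < r -> exp (xi * g' u) <= c * exp (xi * g u)) ->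
  D g' p q <= c * D g p q.
Proof.
  intros HL Hg Hg' Hc Hr Hb.
  apply le_epsilon. intros eps Heps.
  set (eta := Rmin (eps / (c + 1)) ((r - D g p q) / 2)).
  assert (Heta : 0 < eta) by (unfold eta; apply Rmin_pos; [apply Rdiv_lt_0_compat|]; lra).
  assert (Heta1 : eta <= eps / (c + 1)) by apply Rmin_l.
  assert (Heta2 : eta <= (r - D g p q) / 2) by apply Rmin_r.
  destruct (W_path xi D g p q eta HL Hg Heta) as [R1 [T [HP [H0 [HT HI]]]]].
  pose proof HP as [HT0 _].
  assert (Hin : forall t, 0 <= t <= T -> D g p (R1 t) < r).
  { intros t Ht. rewrite <- H0. pose proof (W_lb xi D g R1 T t HL Hg HP Ht).
    pose proof (RInt_mono_t xi _ g R1 T t Hg HP Ht). lra. }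
  assert (H1 : D g' p q <= RInt (Fw xi g' R1) 0 T).
  { rewrite <- H0, <- HT at 1. apply (W_lb xi D g' R1 T T HL Hg' HP). lra. }
  assert (H2 : RInt (Fw xi g' R1) 0 T <= RInt (fun x => c * Fw xi g R1 x) 0 T).
  { apply RInt_le; auto. eapply Fw_int; eauto; lra.
    apply (ex_RInt_scal (V := R_CompleteNormedModule) (Fw xi g R1) 0 T c). eapply Fw_int; eauto; lra.
    intros x Hx. unfold Fw. apply Hb. apply Hin. lra. }
  assert (H3 : RInt (fun x => c * Fw xi g R1 x) 0 T = c * RInt (Fw xi g R1) 0 T).
  { apply (RInt_scal (V := R_CompleteNormedModule) (Fw xi g R1) 0 T c). eapply Fw_int; eauto; lra. }
  assert (H4 : c * RInt (Fw xi g R1) 0 T <= c * (D g p q + eta)) by (apply Rmult_le_compat_l; lra).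
  assert (H5 : c * eta <= eps).
  { apply Rle_trans with (c * (eps / (c + 1))). apply Rmult_le_compat_l; lra.
    apply Rle_trans with ((c + 1) * (eps / (c + 1))). nra. right. field. lra. }
  lra.
Qed.

Lemma local_cmp xi D g g' P a b s c : LQG_family xi D -> 0 < xi -> cont2 g -> cont2 g' ->
  (forall p, 0 <= g p) -> 0 <= c ->
  geodesic (D g) P a b -> 0 <= s <= D g a b ->
  (exists rho, 0 < rho /\ forall u, edist (P s) u < rho -> exp (xi * g' u) <= c * exp (xi * g u)) ->
  exists d, 0 < d /\ forall s', 0 <= s' <= D g a b -> Rabs (s' - s) < d ->
     D g' (P s) (P s') <= c * Rabs (s' - s).
Proof.
  intros HL Hxi Hg Hg' Hpos Hc [_ [_ Hgeo]] Hs [rho [Hrho Hb]].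
  pose proof HL as [_ [[_ HE] _]].
  destruct (HE (P s) rho Hrho) as [d [Hd Hd2]].
  exists d. split; auto. intros s' Hs' Hss.
  rewrite <- (Hgeo s s' Hs Hs').
  apply (compare xi D g g' _ _ d c); auto.
  rewrite (Hgeo s s' Hs Hs'). auto.
  intros u Hu. apply Hb. apply Hd2. pose proof (D_ge_D0 xi D g (P s) u HL Hxi Hg Hpos). lra.
Qed.

Lemma cont_ind (Dp : pt -> pt -> R) (P : R -> pt) u v c :
  (forall x y z, Dp x z <= Dp x y + Dp y z) -> (forall x y, Dp x y = Dp y x) ->
  u <= v -> 0 <= c ->
  (forall s, u <= s <= v -> exists d, 0 < d /\ forall s', u <= s' <= v -> Rabs (s' - s) < d ->
      Dp (P s) (P s') <= c * Rabs (s' - s)) ->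
  Dp (P u) (P v) <= c * (v - u).
Proof.
  intros Htri Hsym Huv Hc Hloc.
  set (E := fun t => u <= t <= v /\ Dp (P u) (P t) <= c * (t - u)).
  assert (HEu : E u).
  { split; [lra|]. destruct (Hloc u ltac:(lra)) as [d [Hd H]].
    specialize (H u ltac:(lra)). rewrite Rminus_eq_0, Rabs_R0 in H. rewrite Rminus_eq_0. apply H; lra. }
  assert (Hb : bound E) by (exists v; intros t [Ht _]; lra).
  destruct (completeness E Hb (ex_intro _ u HEu)) as [m [Hm1 Hm2]].
  assert (Hum : u <= m) by (apply Hm1; auto).
  assert (Hmv : m <= v) by (apply Hm2; intros t [Ht _]; lra).
  destruct (Hloc m ltac:(lra)) as [d [Hd Hl]].
  assert (HEm : E m).
  { destruct (classic (exists t, E t /\ m - d < t)) as [[t [[Ht1 Ht2] Ht3]]|Hn].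
    - assert (t <= m) by (apply Hm1; split; auto).
      split; [lra|].
      specialize (Hl t ltac:(lra)). rewrite Rabs_left1 in Hl by lra.
      assert (Dp (P m) (P t) <= c * - (t - m)) by (apply Hl; lra).
      pose proof (Htri (P u) (P t) (P m)) as Ht4. rewrite (Hsym (P t) (P m)) in Ht4. nra.
    - assert (m <= m - d). { apply Hm2. intros t Ht. apply Rnot_lt_le. intros Hlt. apply Hn. exists t; auto. }
      lra. }
  destruct (Rle_dec v m) as [Hvm|Hvm].
  - replace v with m by lra. apply HEm.
  - set (t := Rmin v (m + d / 2)).
    assert (Ht1 : t <= v) by apply Rmin_l. assert (Ht2 : t <= m + d / 2) by apply Rmin_r.
    assert (Ht3 : m < t) by (unfold t; apply Rmin_glb_lt; lra).
    assert (E t).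
    { split; [lra|]. destruct HEm as [_ HEm].
      specialize (Hl t ltac:(lra)). rewrite Rabs_right in Hl by lra.
      assert (Dp (P m) (P t) <= c * (t - m)) by (apply Hl; lra).
      pose proof (Htri (P u) (P m) (P t)). nra. }
    assert (t <= m) by (apply Hm1; auto). lra.
Qed.

Lemma path_cmp xi D g g' P a b u v c : LQG_family xi D -> 0 < xi -> cont2 g -> cont2 g' ->
  (forall p, 0 <= g p) -> 0 <= c ->
  geodesic (D g) P a b -> 0 <= u -> u <= v -> v <= D g a b ->
  (forall s, u <= s <= v -> exists rho, 0 < rho /\
       forall w, edist (P s) w < rho -> exp (xi * g' w) <= c * exp (xi * g w)) ->
  D g' (P u) (P v) <= c * (v - u).
Proof.
  intros HL Hxi Hg Hg' Hpos Hc Hgeo Hu Huv Hv Hloc.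
  apply cont_ind; auto.
  - intros. apply (W_tri xi); auto.
  - intros. apply (W_sym xi); auto.
  - intros s Hs. destruct (local_cmp xi D g g' P a b s c HL Hxi Hg Hg' Hpos Hc Hgeo ltac:(lra) (Hloc s Hs))
      as [d [Hd H]].
    exists d. split; auto. intros s' Hs' Hss. apply H; auto; lra.
Qed.


Lemma cont2_const c : cont2 (fun _ => c).
Proof. intros p eps He. exists 1. split; [lra|]. intros. rewrite Rminus_eq_0, Rabs_R0. lra. Qed.

Lemma cont2_plus f g : cont2 f -> cont2 g -> cont2 (fun p => f p + g p).
Proof.
  intros Hf Hg p eps He.
  destruct (Hf p (eps/2) ltac:(lra)) as [d1 [Hd1 H1]].
  destruct (Hg p (eps/2) ltac:(lra)) as [d2 [Hd2 H2]].
  exists (Rmin d1 d2). split; [apply Rmin_pos; lra|]. intros q Hq.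
  pose proof (Rmin_l d1 d2). pose proof (Rmin_r d1 d2).
  specialize (H1 q ltac:(lra)). specialize (H2 q ltac:(lra)).
  replace (f q + g q - (f p + g p)) with ((f q - f p) + (g q - g p)) by ring.
  pose proof (Rabs_triang (f q - f p) (g q - g p)). lra.
Qed.

Lemma cont2_scal c f : cont2 f -> cont2 (fun p => c * f p).
Proof.
  intros Hf p eps He.
  destruct (Hf p (eps / (Rabs c + 1))) as [d [Hd H]].
  { apply Rdiv_lt_0_compat; [lra|]. pose proof (Rabs_pos c); lra. }
  exists d. split; auto. intros q Hq. specialize (H q Hq).
  replace (c * f q - c * f p) with (c * (f q - f p)) by ring. rewrite Rabs_mult.
  pose proof (Rabs_pos c). pose proof (Rabs_pos (f q - f p)).
  apply Rle_lt_trans with (Rabs c * (eps / (Rabs c + 1))). apply Rmult_le_compat_l; lra.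
  apply Rlt_le_trans with ((Rabs c + 1) * (eps / (Rabs c + 1))). nra. right; field. lra.
Qed.

Lemma cont2_minus f g : cont2 f -> cont2 g -> cont2 (fun p => f p - g p).
Proof.
  intros Hf Hg. assert (H := cont2_plus f (fun p => -1 * g p) Hf (cont2_scal (-1) g Hg)).
  intros p eps He. destruct (H p eps He) as [d [Hd H2]]. exists d; split; auto. intros q Hq.
  specialize (H2 q Hq). replace (f q - g q - (f p - g p)) with (f q + -1 * g q - (f p + -1 * g p)) by ring. auto.
Qed.

Lemma setup_phi n U U' V phi i : setup n U U' V phi -> (i < n)%nat ->
  cont2 (phi i) /\ (forall p, 0 <= phi i p <= 1) /\
  (forall p, U' i p -> phi i p = 1) /\ (forall p, ~ V i p -> phi i p = 0).
Proof.
  intros [_ [_ H]] Hi. destruct (H i Hi) as [Hs [H1 [H2 H3]]]. split; auto.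
  destruct Hs as [fx fy Hc _ _ _ _]. exact Hc.
Qed.

Lemma cont2_hfield n U U' V phi x : setup n U U' V phi -> cont2 (hfield n phi x).
Proof.
  intros Hs. unfold hfield.
  assert (forall k, (k <= n)%nat -> cont2 (fun u => rsum k (fun i => x i * phi i u))).
  { induction k; intros Hk; simpl. apply cont2_const.
    apply cont2_plus. apply IHk; lia. apply cont2_scal. apply (setup_phi n U U' V phi k Hs). lia. }
  apply H; lia.
Qed.

Lemma hfield_nonneg n U U' V phi x : setup n U U' V phi -> in_cube n x ->
  forall p, 0 <= hfield n phi x p.
Proof.
  intros Hs Hx p. unfold hfield.
  assert (forall k, (k <= n)%nat -> 0 <= rsum k (fun i => x i * phi i p)).
  { induction k; intros Hk; simpl. lra.
    specialize (IHk ltac:(lia)). destruct (setup_phi n U U' V phi k Hs ltac:(lia)) as [_ [H1 _]].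
    specialize (H1 p). specialize (Hx k ltac:(lia)). nra. }
  apply H; lia.
Qed.

Lemma hfield_zero n U U' V phi x p : setup n U U' V phi ->
  (forall j, (j < n)%nat -> ~ V j p) -> hfield n phi x p = 0.
Proof.
  intros Hs H. unfold hfield. apply rsum_zero. intros i Hi.
  destruct (setup_phi n U U' V phi i Hs Hi) as [_ [_ [_ H3]]]. rewrite H3; auto. ring.
Qed.

Lemma hfield_single n U U' V phi x p i : setup n U U' V phi -> (i < n)%nat ->
  (forall j, (j < n)%nat -> j <> i -> ~ V j p) -> hfield n phi x p = x i * phi i p.
Proof.
  intros Hs Hi H. unfold hfield. apply (rsum_single n (fun i => x i * phi i p) i Hi). intros j Hj Hji.
  destruct (setup_phi n U U' V phi j Hs Hj) as [_ [_ [_ H3]]]. rewrite H3; auto. ring.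
Qed.

Lemma closure_sub (A : pset) p : A p -> closure A p.
Proof.
  intros H r Hr. exists p. split; auto. unfold edist. replace (fst p - fst p) with 0 by ring.
  replace (snd p - snd p) with 0 by ring. replace (0 ^ 2 + 0 ^ 2) with 0 by ring. rewrite sqrt_0. lra.
Qed.

Lemma not_closure (A : pset) p : ~ closure A p -> exists r, 0 < r /\ forall q, edist p q < r -> ~ A q.
Proof.
  intros H. apply NNPP. intros Hn. apply H. intros r Hr. apply NNPP. intros Hn2. apply Hn.
  exists r. split; auto. intros q Hq HA. apply Hn2. exists q. auto.
Qed.

Lemma radius_fin (Q : nat -> Prop) (A : nat -> pset) n p :
  (forall j, (j < n)%nat -> Q j -> exists r, 0 < r /\ forall q, edist p q < r -> ~ A j q) ->
  exists r, 0 < r /\ forall q, edist p q < r -> forall j, (j < n)%nat -> Q j -> ~ A j q.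
Proof.
  induction n; intros H.
  - exists 1. split; [lra|]. intros; lia.
  - destruct IHn as [r1 [Hr1 H1]]. { intros j Hj HQ. apply H; auto; lia. }
    destruct (classic (Q n)) as [HQ|HQ].
    + destruct (H n ltac:(lia) HQ) as [r2 [Hr2 H2]].
      exists (Rmin r1 r2). split; [apply Rmin_pos; lra|]. intros q Hq j Hj HQj.
      pose proof (Rmin_l r1 r2). pose proof (Rmin_r r1 r2).
      destruct (Nat.eq_dec j n). subst. apply H2; lra. apply H1; auto; lra || lia.
    + exists r1. split; auto. intros q Hq j Hj HQj. destruct (Nat.eq_dec j n). subst; tauto. apply H1; auto; lia.
Qed.

Lemma phi_one_closure n U U' V phi i p : setup n U U' V phi -> (i < n)%nat ->
  closure (U' i) p -> phi i p = 1.
Proof.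
  intros Hs Hi Hc. destruct (setup_phi n U U' V phi i Hs Hi) as [Hcont [_ [H1 _]]].
  apply NNPP. intros Hne.
  assert (He : 0 < Rabs (1 - phi i p)) by (apply Rabs_pos_lt; lra).
  destruct (Hcont p _ He) as [d [Hd Hd2]].
  destruct (Hc d Hd) as [q [Hq Hpq]]. specialize (Hd2 q Hpq). rewrite H1 in Hd2; auto. lra.
Qed.


Lemma exp_le a b : a <= b -> exp a <= exp b.
Proof. intros H. destruct (Req_dec a b) as [->|Hn]; [lra|]. left; apply exp_increasing; lra. Qed.

Lemma edist_refl p : edist p p = 0.
Proof.
  unfold edist. replace (fst p - fst p) with 0 by ring.
  replace (snd p - snd p) with 0 by ring. replace (0 ^ 2 + 0 ^ 2) with 0 by ring. apply sqrt_0.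
Qed.

Lemma notV_of_notU n (V : nat -> pset) u : ~ union_clV n V u -> forall j, (j < n)%nat -> ~ V j u.
Proof. intros H j Hj HV. apply H. exists j. split; auto. apply closure_sub; auto. Qed.

Lemma ball_cmp xi D n U U' V phi x y z e u :
  LQG_family xi D -> 0 < xi -> setup n U U' V phi -> in_cube n x -> in_cube n y ->
  (forall u', ~ (Defs.ball (D (hfield n phi x)) z e u' /\ union_clV n V u')) ->
  D (hfield n phi x) z u < e -> D (hfield n phi y) z u <= D (hfield n phi x) z u.
Proof.
  intros HL Hxi Hs Hx Hy Hb Hu.
  rewrite <- (Rmult_1_l (D (hfield n phi x) z u)).
  apply (compare xi D _ _ z u e 1 HL (cont2_hfield n U U' V phi x Hs) (cont2_hfield n U U' V phi y Hs)); auto; try lra.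
  intros u' Hu'. assert (Hn : ~ union_clV n V u') by (intros Hc; apply (Hb u'); split; auto).
  rewrite !(hfield_zero n U U' V phi _ u' Hs (notV_of_notU n V u' Hn)). lra.
Qed.

Lemma avoid_cmp xi D n U U' V phi x y P a b :
  LQG_family xi D -> 0 < xi -> setup n U U' V phi -> in_cube n x -> in_cube n y ->
  geodesic (D (hfield n phi x)) P a b ->
  (forall t, 0 <= t <= D (hfield n phi x) a b -> ~ union_clV n V (P t)) ->
  D (hfield n phi y) a b <= D (hfield n phi x) a b.
Proof.
  intros HL Hxi Hs Hx Hy Hg Hav.
  pose proof HL as [[HM0 _] _].
  assert (HL0 : 0 <= D (hfield n phi x) a b).
  { pose proof (D_ge_D0 xi D _ a b HL Hxi (cont2_hfield n U U' V phi x Hs) (hfield_nonneg n U U' V phi x Hs Hx)).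
    pose proof (HM0 a b). lra. }
  pose proof Hg as [H0 [H1 _]].
  pose proof (path_cmp xi D (hfield n phi x) (hfield n phi y) P a b 0 (D (hfield n phi x) a b) 1 HL Hxi
    (cont2_hfield n U U' V phi x Hs) (cont2_hfield n U U' V phi y Hs) (hfield_nonneg n U U' V phi x Hs Hx)
    ltac:(lra) Hg ltac:(lra) HL0 ltac:(lra)) as H.
  rewrite H0, H1 in H. apply Rle_trans with (1 * (D (hfield n phi x) a b - 0)); [|lra].
  apply H. intros s Hs'.
  destruct (radius_fin (fun _ => True) V n (P s)) as [rho [Hrho Hr]].
  { intros j Hj _. apply not_closure. intros Hc. apply (Hav s Hs'). exists j; auto. }
  exists rho. split; auto. intros w Hw.
  assert (Hnv : forall j, (j < n)%nat -> ~ V j w) by (intros j Hj; apply (Hr w Hw j Hj I)).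
  rewrite !(hfield_zero n U U' V phi _ w Hs Hnv). lra.
Qed.

Lemma glb_ex (E : R -> Prop) t0 : E t0 -> (forall t, E t -> 0 <= t) ->
  exists m, (forall t, E t -> m <= t) /\ (forall b, (forall t, E t -> b <= t) -> b <= m).
Proof.
  intros H0 Hb.
  assert (Hbd : bound (fun t => E (- t))) by (exists 0; intros t Ht; specialize (Hb _ Ht); lra).
  assert (H0m : E (- - t0)) by (rewrite Ropp_involutive; exact H0).
  destruct (completeness _ Hbd (ex_intro _ (- t0) H0m)) as [m [Hm1 Hm2]].
  exists (- m). split.
  - intros t Ht. assert (- t <= m) by (apply Hm1; rewrite Ropp_involutive; auto). lra.
  - intros b Hl. assert (m <= - b). { apply Hm2. intros t Ht. specialize (Hl _ Ht). lra. } lra.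
Qed.

Lemma crossing (Q : R -> pt) L (A B : pset) ts :
  (forall s, 0 <= s <= L -> forall eps, 0 < eps -> exists d, 0 < d /\
      forall t, 0 <= t <= L -> Rabs (t - s) < d -> edist (Q s) (Q t) < eps) ->
  is_open B -> (forall p, closure A p -> B p) -> ~ B (Q 0) -> 0 <= ts <= L -> A (Q ts) ->
  exists t1 t2, 0 <= t1 /\ t1 < t2 /\ t2 <= L /\ boundary B (Q t1) /\ boundary A (Q t2) /\
     forall s, t1 <= s <= t2 -> closure B (Q s).
Proof.
  intros Hc HB HAB HQ0 Hts HAts.
  assert (HA0 : ~ A (Q 0)) by (intros H; apply HQ0, HAB, closure_sub, H).
  destruct (glb_ex (fun t => 0 <= t <= ts /\ A (Q t)) ts ltac:(split; [lra|auto]) ltac:(intros t [Ht _]; lra))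
    as [t2 [Hl2 Hg2]].
  assert (Ht2a : 0 <= t2) by (apply Hg2; intros t [Ht _]; lra).
  assert (Ht2b : t2 <= ts) by (apply Hl2; split; [lra|auto]).
  assert (HclA : closure A (Q t2)).
  { intros r Hr. destruct (Hc t2 ltac:(lra) r Hr) as [d [Hd Hd2]].
    destruct (classic (exists t, (0 <= t <= ts /\ A (Q t)) /\ t < t2 + d)) as [[t [[Ht HA] Htd]]|Hn].
    - exists (Q t). split; auto. assert (t2 <= t) by (apply Hl2; auto).
      apply Hd2; [lra|]. rewrite Rabs_right; lra.
    - assert (t2 + d <= t2). { apply Hg2. intros t Ht. apply Rnot_lt_le. intros Hlt. apply Hn. exists t; auto. }
      lra. }
  assert (HbdA : boundary A (Q t2)).
  { split; auto. intros r Hr.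
    destruct (classic (A (Q t2))) as [HA|HA].
    - assert (Ht2p : 0 < t2). { destruct (Req_dec t2 0) as [E|E]; [rewrite E in HA; tauto|lra]. }
      destruct (Hc t2 ltac:(lra) r Hr) as [d [Hd Hd2]].
      set (t := Rmax 0 (t2 - d / 2)).
      assert (Ht0 : 0 <= t) by apply Rmax_l. assert (Ht1 : t2 - d / 2 <= t) by apply Rmax_r.
      assert (Ht3 : t < t2) by (unfold t; apply Rmax_lub_lt; lra).
      exists (Q t). split.
      + intros HAt. assert (t2 <= t) by (apply Hl2; split; [lra|auto]). lra.
      + apply Hd2; [lra|]. rewrite Rabs_left; lra.
    - exists (Q t2). split; auto. rewrite edist_refl. lra. }
  assert (HBt2 : B (Q t2)) by (apply HAB; auto).
  destruct (HB _ HBt2) as [rho [Hrho Hrho2]].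
  destruct (Hc t2 ltac:(lra) rho Hrho) as [d0 [Hd0 Hd02]].
  assert (HBnear : forall t, 0 <= t <= L -> Rabs (t - t2) < d0 -> B (Q t)) by (intros; apply Hrho2, Hd02; auto).
  assert (Hbd1 : bound (fun t => 0 <= t <= t2 /\ ~ B (Q t))) by (exists t2; intros t [Ht _]; lra).
  assert (Hne1 : exists t, 0 <= t <= t2 /\ ~ B (Q t)) by (exists 0; split; [lra|auto]).
  destruct (completeness _ Hbd1 Hne1) as [t1 [Hl1 Hg1]].
  assert (Ht1a : 0 <= t1) by (apply Hl1; split; [lra|auto]).
  assert (Ht1b : t1 <= t2 - d0).
  { apply Hg1. intros t [Ht HnB]. apply Rnot_lt_le. intros Hlt. apply HnB. apply HBnear; [lra|].
    rewrite Rabs_left1; lra. }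
  assert (HBin : forall t, t1 < t <= t2 -> B (Q t)).
  { intros t Ht. apply NNPP. intros HnB. assert (t <= t1) by (apply Hl1; split; [lra|auto]). lra. }
  assert (HbdB : boundary B (Q t1)).
  { split.
    - intros r Hr. destruct (Hc t1 ltac:(lra) r Hr) as [d [Hd Hd2]].
      set (t := Rmin t2 (t1 + d / 2)).
      assert (Ht0 : t <= t2) by apply Rmin_l. assert (Ht1 : t <= t1 + d / 2) by apply Rmin_r.
      assert (Ht3 : t1 < t) by (unfold t; apply Rmin_glb_lt; lra).
      exists (Q t). split. apply HBin; lra. apply Hd2; [lra|]. rewrite Rabs_right; lra.
    - intros r Hr. destruct (classic (B (Q t1))) as [HBt|HBt].
      + destruct (Hc t1 ltac:(lra) r Hr) as [d [Hd Hd2]].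
        destruct (classic (exists t, (0 <= t <= t2 /\ ~ B (Q t)) /\ t1 - d < t)) as [[t [[Ht HnB] Htd]]|Hn].
        * exists (Q t). split; auto. assert (t <= t1) by (apply Hl1; auto).
          apply Hd2; [lra|]. rewrite Rabs_left1; lra.
        * assert (t1 <= t1 - d). { apply Hg1. intros t Ht. apply Rnot_lt_le. intros Hlt. apply Hn. exists t; auto. }
          lra.
      + exists (Q t1). split; auto. rewrite edist_refl. lra. }
  exists t1, t2. repeat split; try lra; auto; try apply HbdB; try apply HbdA.
  intros s Hs. destruct (Req_dec s t1) as [->|Hne]. apply HbdB. apply closure_sub, HBin; lra.
Qed.


Lemma core (gamma dgamma : R) (n : nat) (U U' V : nat -> pset)
    (phi : nat -> pt -> R) (D : (pt -> R) -> pt -> pt -> R) C z w eps x y i :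
  0 < gamma < 2 -> 2 < dgamma ->
  setup n U U' V phi ->
  LQG_family (gamma / dgamma) D ->
  1 < C -> 0 < eps < 1 / (100 * C) ->
  in_cube n x -> in_cube n y -> (i < n)%nat ->
  y i - x i > 8 * exp 1 * / (gamma / dgamma) * C * eps ->
  E_event D n U V phi x eps z w -> E_event D n U V phi y eps z w -> G_event D n U U' C -> False.
Proof.
  intros Hgam Hdg Hs HL HC Heps Hx Hy Hi HD Ex Ey HG.
  set (xi := gamma / dgamma) in *.
  assert (Hxi : 0 < xi) by (unfold xi; apply Rdiv_lt_0_compat; lra).
  assert (Hxi1 : xi < 1) by (unfold xi; apply (Rmult_lt_reg_r dgamma); [lra|]; field_simplify; lra).
  set (gx := hfield n phi x) in *. set (gy := hfield n phi y) in *.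
  assert (Hcx : cont2 gx) by apply (cont2_hfield n U U' V phi x Hs).
  assert (Hcy : cont2 gy) by apply (cont2_hfield n U U' V phi y Hs).
  assert (Hnx : forall p, 0 <= gx p) by apply (hfield_nonneg n U U' V phi x Hs Hx).
  assert (Hny : forall p, 0 <= gy p) by apply (hfield_nonneg n U U' V phi y Hs Hy).
  pose proof HL as [HM0 [[_ HE0] _]].
  unfold E_event in Ex, Ey. cbv zeta in Ex, Ey. fold gx in Ex. fold gy in Ey.
  destruct Ex as [Ex1 [Ex2 [Ex3 [[P0 [a0 [b0 [Ha0 [Hb0 [HP0 HP0av]]]]]] _]]]].
  destruct Ey as [Ey1 [Ey2 [Ey3 [_ Eyi]]]].
  destruct (Eyi i Hi) as [Q [a1 [b1 [Ha1 [Hb1 [HQ [[ts [Hts HUts]] HQav]]]]]]].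
  unfold Defs.ball in Ha0, Hb0, Ha1, Hb1.
  assert (f3 : D gy z a0 <= D gx z a0) by (apply (ball_cmp xi D n U U' V phi x y z eps a0); auto).
  assert (f3' : D gy w b0 <= D gx w b0) by (apply (ball_cmp xi D n U U' V phi x y w eps b0); auto).
  assert (f4 : D gx z a1 <= D gy z a1) by (apply (ball_cmp xi D n U U' V phi y x z eps a1); auto).
  assert (f4' : D gx w b1 <= D gy w b1) by (apply (ball_cmp xi D n U U' V phi y x w eps b1); auto).
  assert (f5 : D gy a0 b0 <= D gx a0 b0) by (apply (avoid_cmp xi D n U U' V phi x y P0 a0 b0); auto).
  set (L := D gy a1 b1).
  assert (Hchain : L < D gx a1 b1 + 8 * eps).
  { pose proof (W_tri xi D gy a1 z b1 HL Hcy). pose proof (W_tri xi D gy z a0 b1 HL Hcy).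
    pose proof (W_tri xi D gy a0 b0 b1 HL Hcy). pose proof (W_tri xi D gy b0 w b1 HL Hcy).
    pose proof (W_sym xi D gy a1 z HL Hcy). pose proof (W_sym xi D gy b0 w HL Hcy).
    pose proof (W_tri xi D gx a0 z b0 HL Hcx). pose proof (W_tri xi D gx z a1 b0 HL Hcx).
    pose proof (W_tri xi D gx a1 b1 b0 HL Hcx). pose proof (W_tri xi D gx b1 w b0 HL Hcx).
    pose proof (W_sym xi D gx a0 z HL Hcx). pose proof (W_sym xi D gx b1 w HL Hcx).
    unfold L. lra. }
  pose proof HQ as [HQ0 [HQL HQd]]. fold L in HQ0, HQL, HQd.
  assert (HLn : 0 <= L) by (pose proof (D_ge_D0 xi D gy a1 b1 HL Hxi Hcy Hny); pose proof (proj1 HM0 a1 b1); unfold L; lra).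
  assert (HQc : forall s, 0 <= s <= L -> forall e, 0 < e -> exists d, 0 < d /\
      forall t, 0 <= t <= L -> Rabs (t - s) < d -> edist (Q s) (Q t) < e).
  { intros s Hs' e He. destruct (HE0 (Q s) e He) as [d [Hd Hd2]]. exists d. split; auto.
    intros t Ht Hts'. apply Hd2. pose proof (D_ge_D0 xi D gy (Q s) (Q t) HL Hxi Hcy Hny).
    rewrite (HQd s t) in H; auto. lra. }
  destruct (setup_phi n U U' V phi i Hs Hi) as [Hphic [Hphi01 [Hphi1 Hphi0]]].
  pose proof Hs as [Hs1 _]. destruct (Hs1 i Hi) as [_ [HU'o [_ [_ [_ [_ [HUU' [HU'V _]]]]]]]].
  assert (HnQ0 : ~ U' i (Q 0)).
  { rewrite HQ0. intros HU. apply (Ey2 a1). split. auto. exists i. split; auto.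
    apply closure_sub. apply HU'V. apply closure_sub. auto. }
  destruct (crossing Q L (U i) (U' i) ts HQc HU'o HUU' HnQ0 Hts HUts)
    as [t1 [t2 [Ht1 [Ht12 [Ht2 [Hbd1 [Hbd2 Hcl]]]]]]].
  assert (Hgap : 1 / C <= t2 - t1).
  { pose proof (HG i Hi (Q t2) (Q t1) Hbd2 Hbd1).
    pose proof (D_ge_D0 xi D gy (Q t2) (Q t1) HL Hxi Hcy Hny).
    rewrite (HQd t2 t1) in H0 by lra. rewrite Rabs_left in H0 by lra. lra. }
  set (Delta := y i - x i) in *.
  set (K := 8 * exp 1 * / xi * C * eps) in *.
  assert (HK : 0 < K) by (unfold K; pose proof (exp_pos 1); assert (0 < / xi) by (apply Rinv_0_lt_compat; lra);
     apply Rmult_lt_0_compat; [|lra]; apply Rmult_lt_0_compat; [|lra]; apply Rmult_lt_0_compat; lra).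
  set (eta := (Delta - K) / 2).
  assert (Heta : 0 < eta) by (unfold eta; lra).
  set (c := exp (xi * (x i - y i + eta))).
  assert (Hw1 : forall s, 0 <= s <= L -> exists rho, 0 < rho /\
      forall u, edist (Q s) u < rho -> exp (xi * gx u) <= 1 * exp (xi * gy u)).
  { intros s Hs'. destruct (radius_fin (fun j => j <> i) V n (Q s)) as [rho [Hrho Hr]].
    { intros j Hj Hji. apply not_closure. apply (HQav s Hs' j Hj Hji). }
    exists rho. split; auto. intros u Hu.
    assert (Hnv : forall j, (j < n)%nat -> j <> i -> ~ V j u) by (intros; apply (Hr u Hu); auto).
    unfold gx, gy. rewrite (hfield_single n U U' V phi x u i Hs Hi Hnv), (hfield_single n U U' V phi y u i Hs Hi Hnv).
    rewrite Rmult_1_l. apply exp_le. specialize (Hphi01 u). apply Rmult_le_compat_l; [lra|].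
    unfold Delta in *. nra. }
  assert (Hp1 : D gx (Q 0) (Q t1) <= 1 * (t1 - 0)).
  { apply (path_cmp xi D gy gx Q a1 b1 0 t1 1 HL Hxi Hcy Hcx Hny ltac:(lra) HQ); try (fold L; lra).
    intros s Hs'. apply Hw1. lra. }
  assert (Hp3 : D gx (Q t2) (Q L) <= 1 * (L - t2)).
  { apply (path_cmp xi D gy gx Q a1 b1 t2 L 1 HL Hxi Hcy Hcx Hny ltac:(lra) HQ); try (fold L; lra).
    intros s Hs'. apply Hw1. lra. }
  assert (Hp2 : D gx (Q t1) (Q t2) <= c * (t2 - t1)).
  { apply (path_cmp xi D gy gx Q a1 b1 t1 t2 c HL Hxi Hcy Hcx Hny ltac:(left; apply exp_pos) HQ); try (fold L; lra).
    intros s Hs'.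
    assert (Hnv : forall j, (j < n)%nat -> j <> i -> ~ V j (Q s)).
    { intros j Hj Hji HV. apply (HQav s ltac:(fold L; lra) j Hj Hji). apply closure_sub; auto. }
    assert (Hf0 : gx (Q s) - gy (Q s) = x i - y i).
    { unfold gx, gy. rewrite (hfield_single n U U' V phi x _ i Hs Hi Hnv), (hfield_single n U U' V phi y _ i Hs Hi Hnv).
      rewrite (phi_one_closure n U U' V phi i (Q s) Hs Hi (Hcl s Hs')). ring. }
    destruct (cont2_minus gx gy Hcx Hcy (Q s) eta Heta) as [d [Hd Hd2]].
    exists d. split; auto. intros u Hu. specialize (Hd2 u Hu). rewrite Hf0 in Hd2.
    assert (Hlt : gx u - gy u < x i - y i + eta) by (pose proof (Rle_abs (gx u - gy u - (x i - y i))); lra).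
    replace (xi * gx u) with (xi * (gx u - gy u) + xi * gy u) by ring. rewrite exp_plus.
    apply Rmult_le_compat_r; [left; apply exp_pos|]. apply exp_le. apply Rmult_le_compat_l; lra. }
  assert (Htri : D gx a1 b1 <= D gx (Q 0) (Q t1) + D gx (Q t1) (Q t2) + D gx (Q t2) (Q L)).
  { rewrite <- HQ0, <- HQL. pose proof (W_tri xi D gx (Q 0) (Q t1) (Q L) HL Hcx).
    pose proof (W_tri xi D gx (Q t1) (Q t2) (Q L) HL Hcx). lra. }
  assert (Hmain : (1 - c) * (t2 - t1) < 8 * eps) by nra.
  set (a := xi * (Delta - eta)).
  assert (Hc : c = exp (- a)) by (unfold c, a, Delta; f_equal; ring).
  assert (HDel1 : Delta <= 1) by (unfold Delta; pose proof (Hx i Hi); pose proof (Hy i Hi); lra).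
  assert (Ha0' : 0 < a) by (unfold a, eta; apply Rmult_lt_0_compat; lra).
  assert (Ha1' : a <= 1) by (unfold a, eta; nra).
  assert (HaK : a > 8 * exp 1 * C * eps).
  { assert (xi * K = 8 * exp 1 * C * eps) by (unfold K; field; lra).
    unfold a, eta. nra. }
  assert (Hea : exp a <= exp 1) by (apply exp_le; lra).
  assert (Hea1 : 1 + a < exp a) by (apply exp_ineq1; lra).
  assert (Hce : c * exp a = 1) by (rewrite Hc, <- exp_plus; replace (- a + a) with 0 by ring; apply exp_0).
  assert (H1c : a / exp 1 <= 1 - c).
  { pose proof (exp_pos a). pose proof (exp_pos 1).
    apply (Rmult_le_reg_r (exp 1)); auto. replace (a / exp 1 * exp 1) with a by (field; lra).
    apply Rle_trans with ((1 - c) * exp a). { replace ((1 - c) * exp a) with (exp a - c * exp a) by ring. rewrite Hce. lra. } apply Rmult_le_compat_l; [|lra]. nra. }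
  assert (H1c' : 8 * C * eps < 1 - c).
  { apply Rlt_le_trans with (a / exp 1); auto. pose proof (exp_pos 1).
    apply (Rmult_lt_reg_r (exp 1)); auto. replace (a / exp 1 * exp 1) with a by (field; lra). lra. }
  assert (H1C : (1 - c) * (1 / C) <= (1 - c) * (t2 - t1)) by (apply Rmult_le_compat_l; [nra|lra]).
  assert (8 * eps < (1 - c) * (1 / C)).
  { apply (Rmult_lt_reg_r C); [lra|]. replace ((1 - c) * (1 / C) * C) with (1 - c) by (field; lra). lra. }
  lra.
Qed.

Theorem lemma4p6 (gamma dgamma : R) (n : nat) (U U' V : nat -> pset)
    (phi : nat -> pt -> R) (D : (pt -> R) -> pt -> pt -> R) :
  0 < gamma < 2 -> 2 < dgamma ->
  setup n U U' V phi ->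
  LQG_family (gamma / dgamma) D ->
  forall (C : R) (z w : pt) (eps : R) (x y : nat -> R),
    1 < C -> 0 < eps < 1 / (100 * C) ->
    in_cube n x -> in_cube n y ->
    (exists i, (i < n)%nat /\
       Rabs (x i - y i) > 8 * exp 1 * / (gamma / dgamma) * C * eps) ->
    E_event D n U V phi x eps z w -> G_event D n U U' C ->
    ~ E_event D n U V phi y eps z w.
Proof.
  intros Hgam Hdg Hs HL C z w eps x y HC Heps Hx Hy [i [Hi Hd]] Ex HG Ey.
  destruct (Rle_dec (x i) (y i)).
  - rewrite Rabs_left1 in Hd by lra.
    apply (core gamma dgamma n U U' V phi D C z w eps x y i); auto. lra.
  - rewrite Rabs_right in Hd by lra.
    apply (core gamma dgamma n U U' V phi D C z w eps y x i); auto.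
Qed.
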